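(* Let $p\in(0,\infty)$, $\omega^0\in\mathbb Z^V$, let $\gamma\subset V$ be a finite nonempty connected set, and let $\omega\in\mathbb Z^V$ satisfy $\omega_v\neq\omega^0_v$ for $v\in\gamma$ and $\omega_v=\omega^0_v$ for $v\notin\gamma$. Let $E_\gamma$ denote the set of edges of $\mathcal T^d$ having at least one endpoint in $\gamma$. Then $$H(\omega)-H(\omega^0):=\sum_{\{v,w\}\in E_\gamma}\Bigl(|\omega_v-\omega_w|^p-|\omega^0_v-\omega^0_w|^p\Bigr)\ \ge\ (dc_p^2-1)\sum_{v\in\gamma}|\omega_v-\omega^0_v|^p-(c_p+1)\sum_{\{v,w\}\in E_\gamma}|\omega^0_v-\omega^0_w|^p,$$ where $c_p=\min\{2^{1-p},1\}$.
   Context: $\mathcal T^d=(V,E)$ is the Cayley tree of order $d\ge2$ (every vertex has $d+1$ neighbours). The excess energy $H(\omega)-H(\omega^0)$ of the $p$-SOS model (edge energy $|\omega_v-\omega_w|^p$) for two configurations differing on finitely many sites is the (finite) sum over edges of the differences of edge energies, which equals the sum over $E_\gamma$ in the claim. *)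

(* Defs.v *)
From HB Require Import structures.
From mathcomp Require Import all_boot all_order all_algebra.
From mathcomp Require Import finmap.
From mathcomp Require Import mathcomp_extra boolp classical_sets functions
  cardinality fsbigop reals exp.
Set Implicit Arguments. Unset Strict Implicit. Unset Printing Implicit Defensive.
Import Order.TTheory GRing.Theory Num.Theory.
Local Open Scope classical_set_scope.
Local Open Scope ring_scope.

(* The Cayley tree T^d of order d: the Cayley graph of the free product of
   d+1 copies of Z/2Z.  Vertices are reduced words over the alphabet 'I_(d+1)
   (no two consecutive letters equal); w is adjacent to v iff one is obtained
   from the other by appending one letter.  Every vertex has d+1 neighbours. *)
Definition reduced (d : nat) (s : seq 'I_d.+1) : bool :=
  sorted (fun a b : 'I_d.+1 => a != b) s.

Definition ctree_vertex (d : nat) := {s : seq 'I_d.+1 | reduced s}.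

Definition word_parent (T : Type) (s : seq T) : seq T := take (size s).-1 s.

Definition ctree_adj (d : nat) (v w : ctree_vertex d) : bool :=
  ((sval w != [::]) && (word_parent (sval w) == sval v))
  || ((sval v != [::]) && (word_parent (sval v) == sval w)).

Definition ctree_connected (d : nat) (gamma : set (ctree_vertex d)) : Prop :=
  forall u w, gamma u -> gamma w ->
    exists p : seq (ctree_vertex d),
      [/\ path (@ctree_adj d) u p, last u p = w & forall x, x \in p -> gamma x].

Definition edges_touching (d : nat) (gamma : set (ctree_vertex d))
  : set {fset (ctree_vertex d)} :=
  [set e | exists v w, [/\ ctree_adj v w, e = [fset v; w]%fset
                          & gamma v \/ gamma w]].

(* the two endpoints of an edge e = {v,w} (order irrelevant below) *)
Definition edge_end (d : nat) (e : {fset (ctree_vertex d)}) (i : nat)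
  : ctree_vertex d :=
  nth (exist _ [::] (erefl true)) (enum_fset e) i.

Definition edge_energy (R : realType) (p : R) (d : nat)
  (om : ctree_vertex d -> int) (e : {fset (ctree_vertex d)}) : R :=
  (`|(om (edge_end e 0) - om (edge_end e 1))%:~R| : R) `^ p.

Definition c_p (R : realType) (p : R) : R := Num.min (2 `^ (1 - p)) 1.

(* Main.v *)
Require Import Defs.
From HB Require Import structures.
From mathcomp Require Import all_boot all_order all_algebra.
From mathcomp Require Import finmap.
From mathcomp Require Import mathcomp_extra boolp classical_sets functions
  cardinality fsbigop reals exp.
From mathcomp Require Import interval_inference convex hoelder.
From mathcomp Require Import zify ring lra.
Import Order.TTheory GRing.Theory Num.Theory.
Local Open Scope classical_set_scope.
Local Open Scope ring_scope.
Set Implicit Arguments. Unset Strict Implicit. Set Warnings "-all".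

Section An.
Context {R : realType}.

Lemma half_conv (p a b : R) : 1 <= p -> 0 <= a -> 0 <= b ->
  (2^-1 * a + 2^-1 * b) `^ p <= 2^-1 * a `^ p + 2^-1 * b `^ p.
Proof.
move=> p1 a0 b0.
rewrite {2 4}(_ : 2^-1 = 1 - 2^-1 :> R); last by rewrite {2}(splitr 1) div1r addrK.
by apply: (convex_powR p1 (Itv01 _ _)) => //=;
  rewrite ?inE/= ?in_itv/= ?andbT// ?invr_ge0// invf_le1 ?ler1n.
Qed.

Lemma subadd_powR (p a b : R) : 0 < p -> p <= 1 -> 0 <= a -> 0 <= b ->
  (a + b) `^ p <= a `^ p + b `^ p.
Proof.
move=> p0 p1 a0 b0.
have [ab0|abp] := eqVneq (a + b) 0.
  by rewrite ab0 powR0 ?gt_eqF// addr_ge0// powR_ge0.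
have abgt : 0 < a + b by rewrite lt_neqAle eq_sym abp addr_ge0.
have key x : 0 <= x -> x <= a + b -> (a + b) `^ p * (x / (a + b)) <= x `^ p.
  move=> x0 xab.
  have [->|xn0] := eqVneq x 0; first by rewrite mul0r powR0 ?gt_eqF.
  have xgt : 0 < x by rewrite lt_neqAle eq_sym xn0.
  have -> : x `^ p = (a + b) `^ p * (x / (a + b)) `^ p.
    by rewrite -powRM ?divr_ge0 ?ltW// mulrCA divff ?mulr1 ?gt_eqF.
  rewrite ler_pM2l ?powR_gt0//; apply: ger1_powR => //.
  by rewrite divr_gt0//= ler_pdivrMr// mul1r.
apply: le_trans (lerD (key a a0 _) (key b b0 _)); last first.
- by rewrite lerDr.
- by rewrite lerDl.
by rewrite -mulrDr -mulrDl divff ?mulr1 ?gt_eqF.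
Qed.

Lemma cp_ge0 (p : R) : 0 <= c_p p.
Proof. by rewrite /c_p le_min powR_ge0 ler01. Qed.

Lemma cp_le1 (p : R) : c_p p <= 1.
Proof. by rewrite /c_p ge_min lexx orbT. Qed.

Lemma Kineq (p s t : R) : 0 < p ->
  c_p p * `|s + t| `^ p <= `|s| `^ p + `|t| `^ p.
Proof.
move=> p0.
have H1 : `|s + t| `^ p <= (`|s| + `|t|) `^ p.
  by apply: ge0_ler_powR; rewrite ?nnegrE ?addr_ge0 ?ler_normD// ltW.
have [p1|p1] := leP 1 p.
  have cE : c_p p = 2 `^ (1 - p).
    apply/min_idPl; rewrite -[X in _ <= X](powRr0 2).
    by apply: ler_powR; rewrite ?ler1n// subr_le0.
  rewrite cE; apply: le_trans (ler_wpM2l (powR_ge0 _ _) H1) _.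
  have -> : `|s| + `|t| = 2 * (2^-1 * `|s| + 2^-1 * `|t|).
    by rewrite -mulrDr mulrA divff ?mul1r.
  rewrite powRM ?ler0n ?addr_ge0 ?mulr_ge0 ?invr_ge0 ?ler0n//.
  rewrite mulrA -powRD; last by apply/implyP => _; rewrite pnatr_eq0.
  rewrite subrK powRr1 ?ler0n//.
  apply: le_trans (ler_wpM2l (ler0n _ 2) (half_conv p1 (normr_ge0 s) (normr_ge0 t))) _.
  by rewrite mulrDr !mulrA divff ?mul1r ?pnatr_eq0.
have cE : c_p p = 1.
  apply/min_idPr; rewrite -[X in X <= _](powRr0 2).
  by apply: ler_powR; rewrite ?ler1n// subr_ge0 ltW.
rewrite cE mul1r; apply: le_trans H1 _.
exact: (subadd_powR p0 (ltW p1) (normr_ge0 s) (normr_ge0 t)).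
Qed.

Lemma edge_ineq (p u y t b : R) : 0 < p -> u = y + t - b ->
  c_p p ^+ 2 * `|u| `^ p <= `|y| `^ p + `|t| `^ p + c_p p * `|b| `^ p.
Proof.
move=> p0 ->.
have h1 := Kineq (y + t) (- b) p0.
have h2 := Kineq y t p0.
rewrite normrN in h1.
apply: le_trans (_ : c_p p * (`|y + t| `^ p + `|b| `^ p) <= _).
  by rewrite expr2 -mulrA ler_wpM2l ?cp_ge0.
rewrite mulrDr lerD2r; apply: le_trans h2 _.
done.
Qed.

End An.

Lemma reduced_take d (s : seq 'I_d.+1) n : reduced s -> reduced (take n s).
Proof. by rewrite /reduced -{1}(cat_take_drop n s) => /cat_sorted2[]. Qed.

Definition par d (v : ctree_vertex d) : ctree_vertex d :=
  exist _ (word_parent (sval v)) (reduced_take _ (proj2_sig v)).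

Definition ext_seq d (s : seq 'I_d.+1) (a : 'I_d.+1) : seq 'I_d.+1 :=
  if reduced (rcons s a) then rcons s a else s.

Lemma ext_seq_red d (s : seq 'I_d.+1) a : reduced s -> reduced (ext_seq s a).
Proof. by rewrite /ext_seq; case: ifP. Qed.

Definition ext d (v : ctree_vertex d) a : ctree_vertex d :=
  exist _ (ext_seq (sval v) a) (ext_seq_red a (proj2_sig v)).

Lemma reduced_rcons d (s : seq 'I_d.+1) a :
  reduced s -> (s = [::] \/ last a s != a) -> reduced (rcons s a).
Proof.
rewrite /reduced; case: s => [|x s] //= H [//|Hl].
by rewrite rcons_path H.
Qed.

Lemma val_inj_ct d (v w : ctree_vertex d) : sval v = sval w -> v = w.
Proof. by move=> h; apply: val_inj. Qed.

Lemma ext_par d (w : ctree_vertex d) : sval w != [::] ->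
  ext (par w) (last ord0 (sval w)) = w.
Proof.
case: w => s hs /= hne; apply: val_inj => /=.
rewrite /ext_seq /word_parent.
have ->: rcons (take (size s).-1 s) (last ord0 s) = s.
  case/lastP: s hs hne => [//|s x] _ _.
  by rewrite size_rcons last_rcons /= -!cats1 take_size_cat.
by rewrite hs.
Qed.

Lemma par_ext d (v : ctree_vertex d) a :
  (sval v = [::] \/ last a (sval v) != a) -> par (ext v a) = v /\ sval (ext v a) != [::].
Proof.
case: v => s hs /= H.
have hr := reduced_rcons hs H.
split; first (apply: val_inj => /=; rewrite /ext_seq hr /word_parent).
  by rewrite size_rcons /= -cats1 take_size_cat.
by rewrite /ext_seq hr; case: (s).
Qed.

Lemma edge_energy2 (R : realType) (p : R) d (om : ctree_vertex d -> int)
  (a b : ctree_vertex d) : a != b ->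
  edge_energy p om [fset a; b]%fset = `|(om a - om b)%:~R| `^ p.
Proof.
move=> ab; rewrite /edge_energy /edge_end.
have hs := cardfs2 a b; rewrite ab in hs.
have hu := fset_uniq [fset a; b]%fset.
have ha : a \in enum_fset [fset a; b]%fset by exact: (fset21 a b).
have hb : b \in enum_fset [fset a; b]%fset by exact: (fset22 a b).
move: hs hu ha hb; case: (enum_fset _) => [|x [|y [|z l]]] //= _.
rewrite !inE andbT => xy /orP[/eqP ax|/eqP ay] /orP[/eqP bx|/eqP bY].
- by move: ab; rewrite ax bx eqxx.
- by rewrite ax bY.
- by rewrite ay bx -opprB rmorphN normrN.
- by move: ab; rewrite ay bY eqxx.
Qed.

Section Comb.
Variable d : nat.
Local Notation V := (ctree_vertex d).

Definition edge (w : V) : {fset V} := [fset par w; w]%fset.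
Definition Wset (gamma : set V) : set V :=
  [set w | sval w != [::] /\ (gamma w \/ gamma (par w))].

Lemma size_par (w : V) : size (sval (par w)) = (size (sval w)).-1.
Proof.
case: w => s hs /=; rewrite /word_parent size_take.
by case: (size s) => //= n; rewrite ltnSn.
Qed.

Lemma par_neq (w : V) : sval w != [::] -> par w != w.
Proof.
move=> hne; apply/negP => /eqP h.
have := size_par w; rewrite h.
by case: (sval w) hne => //= x s _ /eqP; rewrite -[X in X == _]addn1 -{2}(addn0 (size s)) eqn_add2l.
Qed.

Lemma E_eq (gamma : set V) : edges_touching gamma = edge @` Wset gamma.
Proof.
apply/seteqP; split => e.
  case=> v [w [hadj -> hg]].
  case/orP: hadj => /andP[hne /eqP hp].
    have pw : par w = v by apply: val_inj.
    exists w; first by split => //; rewrite pw; case: hg; [right|left].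
    by rewrite /edge pw.
  have pv : par v = w by apply: val_inj.
  exists v; first by split => //; rewrite pv; case: hg; [left|right].
  by rewrite /edge pv fsetUC.
case=> w [hne hg] <-; exists (par w), w; split => //.
- by rewrite /ctree_adj hne eqxx.
- by case: hg; [right|left].
Qed.

Lemma edge_inj (gamma : set V) : set_inj (Wset gamma) edge.
Proof.
move=> w1 w2; rewrite !inE => -[h1 _] [h2 _] he.
have m1 : w1 \in edge w2 by rewrite -he /edge fset22.
have m2 : w2 \in edge w1 by rewrite he /edge fset22.
move: m1 m2; rewrite /edge !in_fset2 => /orP[/eqP e1|/eqP //] /orP[/eqP e2|/eqP //].
have s1 := size_par w1; have s2 := size_par w2.
rewrite -e2 in s1; rewrite -e1 in s2.
have p1 : (0 < size (sval w1))%N by rewrite lt0n size_eq0.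
have p2 : (0 < size (sval w2))%N by rewrite lt0n size_eq0.
lia.
Qed.
End Comb.

Section Comb2.
Variable d : nat.
Local Notation V := (ctree_vertex d).

Lemma W_fin (gamma : set V) : finite_set gamma -> finite_set (Wset gamma).
Proof.
move=> gf.
apply: (@sub_finite_set _ _ (gamma `|` (fun q : V * 'I_d.+1 => ext q.1 q.2) @` (gamma `*` setT))).
  move=> w [hne [hg|hg]]; first by left.
  right; exists (par w, last ord0 (sval w)) => //.
  exact: ext_par.
rewrite finite_setU; split => //.
apply: finite_image; apply: finite_setX => //.
Qed.

Definition child (v : V) (i : nat) : V :=
  ext v (inord (bump (last ord0 (sval v)) i)).

Lemma child_cond (v : V) (i : nat) : (i < d)%N ->
  let a := (inord (bump (last ord0 (sval v)) i) : 'I_d.+1) in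
  sval v = [::] \/ last a (sval v) != a.
Proof.
move=> id a; case E: (sval v) => [|x s]; [by left|right].
have -> : last a (x :: s) = last ord0 (x :: s) by [].
rewrite -E; apply/negP => /eqP h.
have : nat_of_ord (last ord0 (sval v)) = nat_of_ord a by rewrite h.
have hb : (bump (last ord0 (sval v)) i < d.+1)%N.
  have : (bump (last ord0 (sval v)) i <= i.+1)%N.
    by rewrite /bump; case: (last ord0 (sval v) <= i)%N.
  lia.
rewrite /a inordK //.
by move=> /eqP; rewrite (negbTE (neq_bump _ _)).
Qed.

Lemma par_child (v : V) i : (i < d)%N -> par (child v i) = v /\ sval (child v i) != [::].
Proof. by move=> id; apply: par_ext; apply: child_cond. Qed.

Lemma sval_child (v : V) i : (i < d)%N ->
  sval (child v i) = rcons (sval v) (inord (bump (last ord0 (sval v)) i)).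
Proof.
move=> id; rewrite /child /ext /= /ext_seq.
by rewrite (reduced_rcons (proj2_sig v) (child_cond v id)).
Qed.

Lemma child_inj (gamma : set V) :
  set_inj (gamma `*` `I_d) (fun q : V * nat => child q.1 q.2).
Proof.
move=> [v i] [v' j]; rewrite !inE /= => -[_ hi] [_ hj] h.
have hv : v = v'.
  by rewrite -(proj1 (par_child v hi)) -(proj1 (par_child v' hj)) h.
subst v'; congr (_, _).
have := f_equal sval h; rewrite !sval_child // => /rcons_inj [] /(f_equal val).
have hb k : (k < d)%N -> (bump (last ord0 (sval v)) k < d.+1)%N.
  move=> hk; have : (bump (last ord0 (sval v)) k <= k.+1)%N.
    by rewrite /bump; case: (last ord0 (sval v) <= k)%N.
  lia.
rewrite /= !inordK ?hb //.
exact: (can_inj (bumpK _)).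
Qed.

End Comb2.

Section FS.
Context {R : realType} {I : choiceType}.
Implicit Types (A B : set I) (F G : I -> R).

Lemma fs_le A F G : finite_set A -> (forall i, A i -> F i <= G i) ->
  \sum_(i \in A) F i <= \sum_(i \in A) G i.
Proof.
move=> Af FG; rewrite !fsbig_finite// big_seq [X in _ <= X]big_seq.
by apply: ler_sum => i; rewrite in_fset_set// inE => /FG.
Qed.

Lemma fs_sub A B F : finite_set B -> A `<=` B -> (forall i, B i -> 0 <= F i) ->
  \sum_(i \in A) F i <= \sum_(i \in B) F i.
Proof.
move=> Bf AB F0; rewrite [X in _ <= X](fsbigID A)// (setIidr AB) lerDl.
by apply: fsumr_ge0 => i [/F0].
Qed.

Lemma fs_lin A F G (a b : R) : finite_set A ->
  \sum_(i \in A) (a * F i - b * G i) =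
  a * \sum_(i \in A) F i - b * \sum_(i \in A) G i.
Proof. by move=> Af; rewrite !fsbig_finite// sumrB !mulr_sumr. Qed.

End FS.

Unset Implicit Arguments. Set Strict Implicit.
Theorem lemma1 (R : realType) (d : nat) (p : R)
  (om0 om : ctree_vertex d -> int) (gamma : set (ctree_vertex d)) :
  (2 <= d)%N -> 0 < p ->
  finite_set gamma -> gamma !=set0 -> ctree_connected gamma ->
  (forall v, gamma v -> om v != om0 v) ->
  (forall v, ~ gamma v -> om v = om0 v) ->
  \sum_(e \in edges_touching gamma) (edge_energy p om e - edge_energy p om0 e)
  >= (d%:R * c_p p ^+ 2 - 1) *
       \sum_(v \in gamma) (`|(om v - om0 v)%:~R| : R) `^ p
     - (c_p p + 1) * \sum_(e \in edges_touching gamma) edge_energy p om0 e.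
Proof.
move=> d2 p0 gf _ _ _ hout.
set c := c_p p.
pose X v := (`|(om v - om0 v)%:~R| : R) `^ p.
pose Y w := (`|(om (par w) - om w)%:~R| : R) `^ p.
pose B w := (`|(om0 (par w) - om0 w)%:~R| : R) `^ p.
have Wf := W_fin gf.
set W := Wset gamma in Wf.
rewrite E_eq !fsbig_image; try exact: edge_inj.
have eE o w : W w -> edge_energy p o (edge w) = (`|(o (par w) - o w)%:~R| : R) `^ p.
  by move=> [hne _]; rewrite /edge edge_energy2 // par_neq.
have -> : \sum_(w \in W) (edge_energy p om (edge w) - edge_energy p om0 (edge w))
  = \sum_(w \in W) (1 * Y w - 1 * B w).
  by apply: eq_fsbigr => w /[!inE] hw; rewrite !eE // !mul1r.
have -> : \sum_(w \in W) edge_energy p om0 (edge w) = \sum_(w \in W) B w.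
  by apply: eq_fsbigr => w /[!inE] hw; rewrite !eE.
rewrite fs_lin // !mul1r.
set SB := \sum_(i \in W) B i.
set SY := \sum_(i \in W) Y i.
set SG := \sum_(i \in gamma) _.
have h2 : \sum_(w \in W) (c ^+ 2 * X (par w) - 1 * X w) <=
          \sum_(w \in W) (1 * Y w - (- c) * B w).
  apply: fs_le => // w _; rewrite !mul1r mulNr opprK.
  rewrite lerBlDr.
  rewrite /X /Y /B -addrA (addrC (c * _)) addrA; apply: edge_ineq => //.
  by rewrite !intrB; ring.
rewrite !fs_lin // !mul1r mulNr opprK in h2.
have X0 v : ~ gamma v -> X v = 0.
  by move=> hv; rewrite /X hout // subrr normr0 powR0 ?gt_eqF.
have h4 : \sum_(w \in W) X w <= SG.
  rewrite -(fsbig_widen (W `&` gamma) W X) //; last first.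
    move=> w [hw hn]; apply: X0 => hg; exact: hn.
  by apply: fs_sub => // v; rewrite /X => _; exact: powR_ge0.
have h5 : d%:R * SG <= \sum_(w \in W) X (par w).
  have sub : (fun q : ctree_vertex d * nat => child q.1 q.2) @` (gamma `*` `I_d) `<=` W.
    move=> w [[v i] [hv hi] <-] /=.
    have [hp hn] := par_child v hi.
    by split => //; rewrite hp; right.
  apply: le_trans (fs_sub (F := fun w => X (par w)) Wf sub _); last by move=> *; exact: powR_ge0.
  rewrite fsbig_image; last exact: child_inj.
  have -> : \sum_(q \in gamma `*` `I_d) X (par (child q.1 q.2)) =
            \sum_(q \in gamma `*` `I_d) X q.1.
    by apply: eq_fsbigr => -[v i] /[!inE] -[_ hi] /=; rewrite (proj1 (par_child v hi)).
  rewrite -(@pair_fsbig _ _ _ _ _ _ _ (fun v _ => X v)) //.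
  rewrite /SG !fsbig_finite // mulr_sumr.
  apply: ler_sum => v _.
  rewrite -fsbig_ord sumr_const card_ord mulr_natl.
  done.
have h6 : c ^+ 2 * (d%:R * SG) <= c ^+ 2 * \sum_(w \in W) X (par w).
  by apply: ler_wpM2l => //; exact: sqr_ge0.
move: h2 h4 h6; set P := \sum_(w \in W) X (par w); set Q := \sum_(w \in W) X w.
move=> h2 h4 h6.
have hc : 0 <= c by exact: cp_ge0.
rewrite -/SY -/SB in h2. nra.
Qed.
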